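(* Let $(E,j)$ be a soft inductive system of Banach spaces whose connecting maps are asymptotically isometric, i.e. $$\lim_{n\gg m}\lambda_{nm}=1,\qquad \lambda_{nm}:=\inf_{x_m\in E_m,\ \|x_m\|=1}\|j_{nm}x_m\|.$$ Then a uniformly bounded net $x_\bullet$ is $j$-convergent if and only if $\lim_n j_{\infty n}x_n$ exists in $E_\infty$; in that case $j\text{-}\lim_nx_n=\lim_n j_{\infty n}x_n$.
   Context: Let $(N,\le)$ be a directed set; $\lim_{n\gg m}a_{nm}:=\lim_m\limsup_n a_{nm}$. A soft inductive system $(E,j)$: Banach spaces $E_n$, linear contractions $j_{nm}:E_m\to E_n$ ($n\ge m$), $j_{nn}=\mathrm{id}$, $j_{nm}=0$ if $n\not\ge m$, with $\lim_{n\gg m}\|(j_{nl}-j_{nm}j_{ml})x_l\|=0$ for all $l,x_l$. Nets $x_\bullet=(x_n)$, $x_n\in E_n$; seminorm $|x_\bullet|=\limsup_n\|x_n\|$ on uniformly bounded nets. Basic nets: $j_{\bullet m}x_m=(j_{nm}x_m)_n$. $C(E,j)$ ($j$-convergent nets): seminorm closure of basic nets; $C_0(E,j)$: nets with $\|x_n\|\to0$. $E_\infty:=C(E,j)/C_0(E,j)$ with norm $\|x_\infty\|=|x_\bullet|$, $x_\infty=j\text{-}\lim_nx_n$ the class of $x_\bullet$; $j_{\infty m}x_m:=j\text{-}\lim_nj_{nm}x_m$. *)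

(* Defs.v *)
From HB Require Import structures.
From mathcomp Require Import all_boot all_order all_algebra.
From mathcomp Require Import all_classical all_reals all_analysis.
Set Implicit Arguments. Unset Strict Implicit. Unset Printing Implicit Defensive.
Import Order.TTheory GRing.Theory Num.Theory.
Import numFieldNormedType.Exports.
Local Open Scope classical_set_scope.
Local Open Scope ring_scope.

Section SoftInductive.
Variables (R : realType) (N : Type) (le : N -> N -> Prop).

Definition directed_set : Prop :=
  [/\ inhabited N, (forall a, le a a),
      (forall a b c, le a b -> le b c -> le a c) &
      (forall a b, exists c, le a c /\ le b c)].

Definition limsupN (f : N -> \bar R) : \bar R :=
  ereal_inf [set ereal_sup [set f n | n in [set n | le m n]] | m in [set: N]].

Definition cvgN (g : N -> \bar R) (l : R) : Prop :=
  forall e : R, 0 < e -> exists m0, forall m, le m0 m ->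
    (`| g m - l%:E | < e%:E)%E.

(* lim_{n >> m} a n m = l  :=  lim_m limsup_n a n m = l *)
Definition limgg (a : N -> N -> \bar R) (l : R) : Prop :=
  cvgN (fun m => limsupN (fun n => a n m)) l.

Variables (E : N -> completeNormedModType R)
          (j : forall n m : N, {linear E m -> E n}).

Definition soft_inductive_system : Prop :=
  [/\ (forall n m, le m n -> forall x : E m, `| j n m x | <= `| x |),
      (forall n (x : E n), j n n x = x),
      (forall n m, ~ le m n -> forall x : E m, j n m x = 0) &
      (forall l (x : E l),
         limgg (fun n m => (`| j n l x - j n m (j m l x) |)%:E) 0)].

(* lambda_{nm} = inf_{||x_m|| = 1} ||j_{nm} x_m||  (inf of empty set = +oo) *)
Definition lambda (n m : N) : \bar R :=
  ereal_inf [set (`| j n m x |)%:E | x in [set x : E m | `| x | = 1]].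

Definition asymptotically_isometric : Prop := limgg lambda 1.

Definition net := forall n : N, E n.

Definition unif_bounded (x : net) : Prop :=
  exists M : R, forall n, `| x n | <= M.

Definition seminormN (x : net) : \bar R := limsupN (fun n => (`| x n |)%:E).

Definition net_sub (x y : net) : net := fun n => x n - y n.

Definition basic (m : N) (xm : E m) : net := fun n => j n m xm.

(* C(E,j): closure, for the seminorm, of the set of basic nets,
   inside the space of uniformly bounded nets *)
Definition jconvergent (x : net) : Prop :=
  unif_bounded x /\
  forall e : R, 0 < e -> exists m (xm : E m),
    (seminormN (net_sub x (basic xm)) < e%:E)%E.

Definition null_net (x : net) : Prop := cvgN (fun n => (`| x n |)%:E) 0.

(* In E_oo = C/C_0 (norm ||[y]|| = |y_.|), the net n |-> j_{oo n} x_n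
   converges to the class of y : C, i.e. ||j_{oo n} x_n - [y]|| -> 0. *)
Definition jinf_lim (x y : net) : Prop :=
  cvgN (fun n => seminormN (net_sub (basic (x n)) y)) 0.

End SoftInductive.

(* Main.v *)
Require Import Defs.
From HB Require Import structures.
From mathcomp Require Import all_boot all_order all_algebra.
From mathcomp Require Import all_classical all_reals all_analysis.
From mathcomp Require Import lra ring.
Import Order.TTheory GRing.Theory Num.Theory.
Import numFieldNormedType.Exports.
Local Open Scope classical_set_scope.
Local Open Scope ring_scope.

Lemma absl {R : realType} {g : \bar R} {e : R} :
  (`| g - 0%:E | < e%:E)%E -> (g < e%:E)%E.
Proof. by rewrite sube0 => /(le_lt_trans (lee_abs _)). Qed.

Lemma absr {R : realType} {g : \bar R} {e : R} :
  (0 <= g)%E -> (g < e%:E)%E -> (`| g - 0%:E | < e%:E)%E.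
Proof. by move=> g0; rewrite sube0 gee0_abs. Qed.

Lemma abs1 {R : realType} {s : \bar R} :
  (`| s - 1%:E | < (1/2)%:E)%E -> ((1/2)%:E < s)%E.
Proof.
case: s => [r| |] //=.
rewrite !lte_fin => h.
have := ler_norm (1 - r); rewrite distrC; lra.
Qed.
Section L.
Variables (R : realType) (N : Type) (le : N -> N -> Prop).
Hypothesis hrefl : forall a, le a a.

Lemma limsup_lt (f : N -> \bar R) (e : R) :
  (limsupN le f < e%:E)%E -> exists m, forall n, le m n -> (f n < e%:E)%E.
Proof.
move=> /ereal_inf_lt[y [m _ <-]] hy; exists m => n hn.
apply: le_lt_trans hy; apply: ereal_sup_ubound; by exists n.
Qed.

Lemma limsup_le (f : N -> \bar R) (e : R) m :
  (forall n, le m n -> (f n <= e%:E)%E) -> (limsupN le f <= e%:E)%E.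
Proof.
move=> h; apply: ge_ereal_inf; exists (ereal_sup [set f n | n in [set n | le m n]]).
  by exists m.
by apply: ge_ereal_sup => _ [n hn <-]; apply: h.
Qed.

Lemma limsup_ge0 (f : N -> \bar R) :
  (forall n, (0 <= f n)%E) -> (0 <= limsupN le f)%E.
Proof.
move=> h; apply/ereal_infP => _ [m _ <-].
apply: le_trans (h m) _; apply: ereal_sup_ubound; by exists m.
Qed.
End L.
Arguments limsup_lt {R N le f e}.
Arguments limsup_le {R N le f e m}.
Arguments limsup_ge0 {R N le} hrefl {f}.

Section Main.
Variables (R : realType) (N : Type) (le : N -> N -> Prop)
  (E : N -> completeNormedModType R) (j : forall n m : N, {linear E m -> E n}).
Hypothesis hD : directed_set le.
Hypothesis hS : soft_inductive_system le j.

Lemma refl_ a : le a a. Proof. by case: hD. Qed.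
Lemma trans_ a b c : le a b -> le b c -> le a c. Proof. by case: hD => _ _ h _; apply: h. Qed.
Lemma dir2 {P Q : N -> Prop} :
  (exists a, forall n, le a n -> P n) -> (exists b, forall n, le b n -> Q n) ->
  exists c, forall n, le c n -> P n /\ Q n.
Proof.
move=> [a ha] [b hb]; case: hD => _ _ _ /(_ a b) [c [ac bc]].
by exists c => n cn; split; [apply: ha; apply: trans_ ac cn|apply: hb; apply: trans_ bc cn].
Qed.

Lemma contr n m (w : E m) : `|j n m w| <= `|w|.
Proof.
case: hS => h1 _ h3 _; have [h|h] := pselect (le m n); first exact: h1.
by rewrite h3 // normr0.
Qed.

Lemma Fwd {y : net E} : jconvergent le j y -> forall e : R, 0 < e ->
  exists n0, forall n, le n0 n ->
    (limsupN le (fun k => (`|j k n (y n) - y k|)%:E) < e%:E)%E.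
Proof.
move=> [_ hC] e e0.
have e4 : 0 < e / 4 by lra.
case: (hC _ e4) => m [z hz].
have [a1 ha1] := limsup_lt hz.
case: hS => _ _ _ /(_ m z (e/4) e4) hs.
have [c hc] := dir2 (ex_intro _ a1 ha1) hs.
exists c => n cn; have [hn1 hn2] := hc n cn.
have [b1 hb1] := limsup_lt (absl hn2).
have [d hd] := dir2 (ex_intro _ b1 hb1) (ex_intro _ a1 ha1).
apply: (@le_lt_trans _ _ (e/4 + e/4 + e/4)%:E); last by rewrite lte_fin; lra.
apply: (limsup_le (m:=d)) => k dk; have [hk1 hk2] := hd k dk.
move: hn1 hk1 hk2; rewrite /net_sub /basic /= !lte_fin => hn1 hk1 hk2.
rewrite lee_fin.
have -> : j k n (y n) - y k = j k n (y n - j n m z) + (j k n (j n m z) - j k m z)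
   + (j k m z - y k).
  by rewrite linearB /=; rewrite !addrA subrK; rewrite addrNK.
apply: (le_trans (ler_normD _ _)); apply: lerD; last by rewrite distrC ltW.
apply: (le_trans (ler_normD _ _)); apply: lerD.
  exact: (le_trans (contr _ _ _) (ltW hn1)).
by rewrite distrC ltW.
Qed.

Lemma Fwd' (y : net E) : jconvergent le j y -> jinf_lim le j y y.
Proof.
move=> hy e e0; have [n0 h] := Fwd hy _ e0; exists n0 => n hn.
apply: absr; last exact: h.
by apply: (limsup_ge0 refl_) => k.
Qed.

Hypothesis hA : asymptotically_isometric le j.

Lemma lamI {k} {z : E k} {d : R} : 0 < d ->
  ((1/2)%:E < limsupN le (fun l => lambda j l k))%E ->
  (exists m, forall l, le m l -> `|j l k z| <= d) -> `|z| < 2 * d.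
Proof.
move=> d0 h [m hm].
have [->|z0] := eqVneq z 0; first by rewrite normr0; lra.
have nz : 0 < `|z| by rewrite normr_gt0.
set u := `|z|^-1 *: z.
have nu : `|u| = 1 by rewrite normrZ normfV normr_id mulVf // gt_eqF.
have : (limsupN le (fun l => lambda j l k) <= (d / `|z|)%:E)%E.
  apply: (limsup_le (m:=m)) => l lm.
  apply: (@le_trans _ _ (`|j l k u|)%:E).
    by apply: ereal_inf_lbound; exists u.
  rewrite lee_fin /u linearZ /= normrZ normfV normr_id mulrC.
  by rewrite ler_pM2r ?invr_gt0 // hm.
move=> /(lt_le_trans h); rewrite lte_fin ltr_pdivlMr // => h2; lra.
Qed.

Lemma Key (x y : net E) : jconvergent le j y -> jinf_lim le j x y ->
  null_net le (net_sub x y).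
Proof.
move=> hy hxy e e0.
have e4 : 0 < e / 4 by lra.
have [c hc] := dir2 (hxy _ e4) (dir2 (Fwd hy _ e4) (hA (1/2) ltac:(lra))).
exists c => n cn; have [hn1 [hn2 hn3]] := hc n cn.
apply: absr; first by rewrite lee_fin.
rewrite lte_fin /net_sub.
have -> : e = 2 * (e / 2) by field.
apply: lamI; [lra| exact: abs1 |].
have [b1 hb1] := limsup_lt (absl hn1).
have [b2 hb2] := limsup_lt hn2.
have [d hd] := dir2 (ex_intro _ b1 hb1) (ex_intro _ b2 hb2).
exists d => l dl; have [hl1 hl2] := hd l dl.
move: hl1 hl2; rewrite /net_sub /basic /= !lte_fin => hl1 hl2.
have -> : j l n (x n - y n) = (j l n (x n) - y l) - (j l n (y n) - y l).
  by rewrite linearB /= opprB addrA subrK.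
apply: (le_trans (ler_normB _ _)); lra.
Qed.

Lemma Rev (x y : net E) : unif_bounded x -> null_net le (net_sub x y) ->
  jconvergent le j y -> jconvergent le j x.
Proof.
move=> hx hn [_ hC]; split => // e e0.
have e4 : 0 < e / 4 by lra.
case: (hC _ e4) => m [z hz].
have [a1 ha1] := limsup_lt hz.
have [d hd] := dir2 (ex_intro _ a1 ha1) (hn _ e4).
exists m, z.
apply: (@le_lt_trans _ _ (e/4 + e/4)%:E); last by rewrite lte_fin; lra.
apply: (limsup_le (m:=d)) => k dk; have [hk1 hk2] := hd k dk.
have hk2' := absl hk2.
move: hk1 hk2'; rewrite /net_sub /basic /= !lte_fin => hk1' hk3.
rewrite lee_fin.
have -> : x k - j k m z = (x k - y k) + (y k - j k m z) by rewrite addrA subrK.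
apply: (le_trans (ler_normD _ _)); lra.
Qed.
End Main.

Theorem mainTheorem4 (R : realType) (N : Type) (le : N -> N -> Prop)
  (E : N -> completeNormedModType R) (j : forall n m : N, {linear E m -> E n}) :
  directed_set le ->
  soft_inductive_system le j ->
  asymptotically_isometric le j ->
  forall x : net E, unif_bounded x ->
    (jconvergent le j x <->
       exists y : net E, jconvergent le j y /\ jinf_lim le j x y) /\
    (jconvergent le j x ->
       forall y : net E, jconvergent le j y -> jinf_lim le j x y ->
         null_net le (net_sub x y)).
Proof.
move=> hD hS hA x hx; split; last first.
  by move=> _ y hy hxy; exact: (@Key _ _ _ _ _ hD hS hA _ _ hy hxy).
split; first by move=> hxC; exists x; split => //; exact: (@Fwd' _ _ _ _ _ hD hS _).
by move=> [y [hy hxy]]; apply: (@Rev _ _ _ _ _ hD _ _ hx (@Key _ _ _ _ _ hD hS hA _ _ hy hxy) hy).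
Qed.
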